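(* Let $\nu \geq 0$, $\alpha > -1$ and $c > 0$. For integers $k \geq 0$ define the moments $$\mu_k = \int_0^{\infty} x^{k+\alpha} e^{-cx}\,[J_{\nu}(x)+1]\, dx, \qquad \mu_{k,0} = \int_0^{\infty} x^{k+\alpha} e^{-cx} J_{\nu}(x)\, dx .$$ Then for all $k \geq 1$, $$\mu_{k+1} = \frac{1}{c^2+1}\left\{ c\,[2(k+\alpha)+1]\,\mu_k - [(k+\alpha)^2-\nu^2]\,\mu_{k-1} + \frac{\Gamma(k+\alpha)\,[(k+\alpha)^2+(k+\alpha)-c^2\nu^2]}{c^{k+\alpha+2}} \right\},$$ with $$\mu_0 = \mu_{0,0} + \frac{\Gamma(\alpha+1)}{c^{\alpha+1}}, \qquad \mu_1 = \mu_{1,0} + \frac{\Gamma(\alpha+2)}{c^{\alpha+2}}.$$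
   Context: $J_\nu$ is the Bessel function of the first kind of order $\nu$ and $\Gamma$ the Gamma function. *)

(* Defs.v *)
From Stdlib Require Import Reals.
From Coquelicot Require Import Coquelicot.
Open Scope R_scope.

Definition Gamma (s : R) : R :=
  RInt_gen (fun t => Rpower t (s - 1) * exp (- t))
           (at_right 0) (Rbar_locally p_infty).

Definition BesselJ (nu x : R) : R :=
  Rpower (x / 2) nu *
  Series (fun m : nat =>
            (-1) ^ m / (INR (Factorial.fact m) * Gamma (INR m + nu + 1)) * (x / 2) ^ (2 * m)).

Definition mu (nu alpha c : R) (k : nat) : R :=
  RInt_gen (fun x => Rpower x (INR k + alpha) * exp (- c * x) * (BesselJ nu x + 1))
           (at_right 0) (Rbar_locally p_infty).

Definition mu0 (nu alpha c : R) (k : nat) : R :=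
  RInt_gen (fun x => Rpower x (INR k + alpha) * exp (- c * x) * BesselJ nu x)
           (at_right 0) (Rbar_locally p_infty).

(* Main.v *)
Require Import Defs.
From Stdlib Require Import Reals.
From Coquelicot Require Import Coquelicot.
From Stdlib Require Import Lra Lia.
Open Scope R_scope.


Lemma ex_RInt_pos (f : R -> R) (a b : R) :
  (forall x, 0 < x -> continuous f x) -> 0 < a -> 0 < b -> ex_RInt f a b.
Proof.
  intros Hc Ha Hb. apply (@ex_RInt_continuous R_CompleteNormedModule). intros z Hz. apply Hc.
  destruct Hz as [Hz _]. eapply Rlt_le_trans; [|exact Hz].
  unfold Rmin; destruct Rle_dec; lra.
Qed.

Lemma ball_R (x y e : R) : ball x e y <-> Rabs (y - x) < e.
Proof. reflexivity. Qed.

Lemma lim_prim_exists (F0 : (R -> Prop) -> Prop) {HF : ProperFilter F0}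
  (f G : R -> R) (Q : R -> Prop) :
  (forall x, 0 < x -> continuous f x) ->
  F0 Q -> (forall u, Q u -> 0 < u) ->
  (forall u v, Q u -> Q v -> u <= v -> Rabs (RInt f u v) <= G v - G u) ->
  (exists l, filterlim G F0 (locally l)) ->
  exists l, filterlim (fun b => RInt f 1 b) F0 (locally l).
Proof.
  intros Hc HQ HQp Hb HG.
  apply (filterlim_locally_cauchy (U := R_CompleteSpace)).
  assert (HG' := proj2 (filterlim_locally_cauchy (U := R_CompleteSpace) (F := F0) G) HG).
  clear HG; rename HG' into HG.
  intros eps. destruct (HG eps) as [P [HP HPb]].
  exists (fun x => P x /\ Q x). split.
  - now apply filter_and.
  - intros u v [Pu Qu] [Pv Qv].
    assert (Hu := HQp _ Qu). assert (Hv := HQp _ Qv).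
    specialize (HPb u v Pu Pv). rewrite ball_R in HPb |- *.
    assert (E : RInt f 1 v - RInt f 1 u = RInt f u v).
    { rewrite <- (RInt_Chasles f 1 u v); try (apply ex_RInt_pos; auto; lra).
      unfold plus; simpl. ring. }
    rewrite E.
    destruct (Rle_dec u v) as [Huv|Huv].
    + eapply Rle_lt_trans; [apply Hb; auto|].
      eapply Rle_lt_trans; [apply Rle_abs|exact HPb].
    + rewrite <- (opp_RInt_swap (V:=R_CompleteNormedModule)); [|apply ex_RInt_pos; auto].
      unfold opp; simpl; rewrite Rabs_Ropp.
      eapply Rle_lt_trans; [apply Hb; auto; lra|].
      eapply Rle_lt_trans; [apply Rle_abs|].
      rewrite <- Rabs_Ropp. replace (- (G u - G v)) with (G v - G u) by ring. exact HPb.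
Qed.

Lemma lim_exp_neg (e : R) : 0 < e ->
  filterlim (fun x => exp (- e * x)) (Rbar_locally p_infty) (locally 0).
Proof.
  intros He.
  eapply filterlim_comp; [|exact is_lim_exp_m].
  assert (H := filterlim_Rbar_mult_l (-e) p_infty).
  replace (Rbar_mult (- e) p_infty) with m_infty in H.
  - exact H.
  - simpl. destruct (Rle_dec 0 (-e)); [exfalso; lra|]. reflexivity.
Qed.

Lemma lim_Rpower_0 (p : R) : 0 < p ->
  filterlim (fun x => Rpower x p) (at_right 0) (locally 0).
Proof.
  intros Hp. unfold Rpower.
  eapply filterlim_comp; [|exact is_lim_exp_m].
  eapply filterlim_comp; [exact is_lim_ln_0|].
  assert (H := filterlim_Rbar_mult_l p m_infty).
  replace (Rbar_mult p m_infty) with m_infty in H.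
  - exact H.
  - simpl. destruct (Rle_dec 0 p); [|exfalso; lra]. destruct (Rle_lt_or_eq_dec 0 p r); [reflexivity|exfalso; lra].
Qed.

Lemma is_derive_Rpower (x p : R) : 0 < x -> is_derive (fun y => Rpower y p) x (p * Rpower x (p - 1)).
Proof. intros Hx. apply is_derive_Reals, derivable_pt_lim_power, Hx. Qed.

Lemma continuous_Rpower (x p : R) : 0 < x -> continuous (fun y => Rpower y p) x.
Proof. intros Hx. apply (@ex_derive_continuous R_AbsRing R_NormedModule). eexists. apply is_derive_Rpower, Hx. Qed.

Lemma filterlim_scal_l' {F : (R -> Prop) -> Prop} {FF : Filter F} (g : R -> R) (k l : R) :
  filterlim g F (locally l) -> filterlim (fun x => k * g x) F (locally (k * l)).
Proof.
  intros H. eapply filterlim_comp; [exact H|].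
  apply (filterlim_Rbar_mult_l k l).
Qed.

Lemma RInt_bound_by_prim (f g G : R -> R) (u v : R) :
  u <= v -> ex_RInt f u v ->
  (forall x, u <= x <= v -> is_derive G x (g x)) ->
  (forall x, u <= x <= v -> continuous g x) ->
  (forall x, u <= x <= v -> Rabs (f x) <= g x) ->
  Rabs (RInt f u v) <= G v - G u.
Proof.
  intros Huv Hf HG Hgc Hb.
  assert (Hg : is_RInt g u v (G v - G u)).
  { apply (is_RInt_derive (V := R_CompleteNormedModule) G g).
    - intros x Hx. apply HG. unfold Rmin, Rmax in Hx; destruct Rle_dec; lra.
    - intros x Hx. apply Hgc. unfold Rmin, Rmax in Hx; destruct Rle_dec; lra. }
  eapply Rle_trans; [apply abs_RInt_le; auto|].
  rewrite <- (is_RInt_unique _ _ _ _ Hg).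
  apply RInt_le; auto.
  - apply ex_RInt_norm, Hf.
  - eexists; exact Hg.
  - intros x Hx. apply Hb. lra.
Qed.

Lemma lim_inf_bound (f : R -> R) (C e : R) : 0 < e ->
  (forall x, 0 < x -> continuous f x) ->
  (forall x, 1 <= x -> Rabs (f x) <= C * exp (- e * x)) ->
  exists l, filterlim (fun b => RInt f 1 b) (Rbar_locally p_infty) (locally l).
Proof.
  intros He Hc Hb.
  apply (lim_prim_exists _ f (fun x => - C / e * exp (- e * x)) (fun x => 1 < x)); auto.
  - exists 1. auto.
  - intros; lra.
  - intros u v Hu Hv Huv.
    apply RInt_bound_by_prim with (g := fun x => C * exp (- e * x)) (G := fun x => - C / e * exp (- e * x)); auto.
    + apply ex_RInt_pos; auto; lra.
    + intros x _. auto_derive; auto. field. lra.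
    + intros x _. apply (@ex_derive_continuous R_AbsRing R_NormedModule). auto_derive. auto.
    + intros x Hx. apply Hb. lra.
  - exists (- C / e * 0). apply filterlim_scal_l', lim_exp_neg, He.
Qed.

Lemma lim_0_bound (f : R -> R) (C b d : R) : -1 < b -> 0 < d ->
  (forall x, 0 < x -> continuous f x) ->
  (forall x, 0 < x < d -> Rabs (f x) <= C * Rpower x b) ->
  exists l, filterlim (fun a => RInt f 1 a) (at_right 0) (locally l).
Proof.
  intros Hbt Hd Hc Hb.
  apply (lim_prim_exists _ f (fun x => C / (b + 1) * Rpower x (b + 1)) (fun x => 0 < x < d)); auto.
  - exists (mkposreal _ Hd). intros y Hy Hy0. split; auto.
    rewrite ball_R in Hy. simpl in Hy. apply Rabs_lt_between in Hy. lra.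
  - intros; lra.
  - intros u v Hu Hv Huv.
    apply RInt_bound_by_prim with (g := fun x => C * Rpower x b) (G := fun x => C / (b + 1) * Rpower x (b + 1)); auto.
    + apply ex_RInt_pos; auto; lra.
    + intros x Hx.
      replace (C * Rpower x b) with (C / (b + 1) * ((b + 1) * Rpower x (b + 1 - 1))).
      * apply is_derive_scal with (f := fun y => Rpower y (b + 1)). apply is_derive_Rpower. lra.
      * replace (b + 1 - 1) with b by ring. field. lra.
    + intros x Hx. apply (@ex_derive_continuous R_AbsRing R_NormedModule).
      eexists. apply is_derive_scal with (f := fun y => Rpower y b). apply is_derive_Rpower. lra.
    + intros x Hx. apply Hb. lra.
  - exists (C / (b + 1) * 0). apply filterlim_scal_l', lim_Rpower_0. lra.
Qed.

Lemma is_RInt_gen_prim (H h : R -> R) (la lb : R) :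
  (forall x, 0 < x -> is_derive H x (h x)) ->
  (forall x, 0 < x -> continuous h x) ->
  filterlim H (at_right 0) (locally la) ->
  filterlim H (Rbar_locally p_infty) (locally lb) ->
  is_RInt_gen h (at_right 0) (Rbar_locally p_infty) (lb - la).
Proof.
  intros HD Hc Ha Hb.
  assert (HP : filter_prod (at_right 0) (Rbar_locally p_infty)
     (fun ab : R * R => forall x, Rmin (fst ab) (snd ab) <= x <= Rmax (fst ab) (snd ab) -> 0 < x)).
  { apply Filter_prod with (Q := fun a => 0 < a) (R := fun b => 0 < b).
    - exists (mkposreal 1 Rlt_0_1). intros y _ Hy. exact Hy.
    - exists 0. intros y Hy. exact Hy.
    - intros a b Ha' Hb' x [Hx _]. simpl in Hx. eapply Rlt_le_trans; [|exact Hx].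
      unfold Rmin; destruct Rle_dec; lra. }
  apply is_RInt_gen_ext with (f := Derive H).
  - eapply filter_imp; [|exact HP]. intros [a b] Hab x Hx. simpl in *.
    apply is_derive_unique, HD, Hab. lra.
  - apply is_RInt_gen_Derive; auto.
    + eapply filter_imp; [|exact HP]. intros [a b] Hab x Hx.
      eexists. apply HD, Hab, Hx.
    + eapply filter_imp; [|exact HP]. intros [a b] Hab x Hx.
      apply continuous_ext_loc with (g := h).
      * assert (Hx0 := Hab x Hx). assert (Hp : 0 < x / 2) by lra.
        exists (mkposreal _ Hp). intros y Hy.
        rewrite ball_R in Hy. simpl in Hy.
        apply Rabs_lt_between in Hy. symmetry. apply is_derive_unique, HD. lra.
      * apply Hc, Hab, Hx.
Qed.

Lemma RInt_gen_from_prim (f : R -> R) (la lb : R) :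
  (forall x, 0 < x -> continuous f x) ->
  filterlim (fun a => RInt f 1 a) (at_right 0) (locally la) ->
  filterlim (fun b => RInt f 1 b) (Rbar_locally p_infty) (locally lb) ->
  is_RInt_gen f (at_right 0) (Rbar_locally p_infty) (lb - la).
Proof.
  intros Hc Ha Hb. apply is_RInt_gen_prim with (H := fun y => RInt f 1 y); auto.
  intros x Hx. apply is_derive_RInt with (a := 1); [|now apply Hc].
  assert (Hp : 0 < x / 2) by lra.
  exists (mkposreal _ Hp). intros y Hy. apply (@RInt_correct R_CompleteNormedModule).
  apply ex_RInt_pos; auto; try lra.
  rewrite ball_R in Hy. simpl in Hy. apply Rabs_lt_between in Hy. lra.
Qed.

Lemma ex_int (f : R -> R) (C b d C' e : R) :
  -1 < b -> 0 < d -> 0 < e ->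
  (forall x, 0 < x -> continuous f x) ->
  (forall x, 0 < x < d -> Rabs (f x) <= C * Rpower x b) ->
  (forall x, 1 <= x -> Rabs (f x) <= C' * exp (- e * x)) ->
  exists l, is_RInt_gen f (at_right 0) (Rbar_locally p_infty) l.
Proof.
  intros Hb Hd He Hc H0 H1.
  destruct (lim_0_bound f C b d Hb Hd Hc H0) as [la Ha].
  destruct (lim_inf_bound f C' e He Hc H1) as [lb Hlb].
  exists (lb - la). apply RInt_gen_from_prim; auto.
Qed.

Lemma is_RInt_gen_scale (f : R -> R) (l c : R) : 0 < c ->
  is_RInt_gen f (at_right 0) (Rbar_locally p_infty) l ->
  is_RInt_gen (fun x => c * f (c * x)) (at_right 0) (Rbar_locally p_infty) l.
Proof.
  intros Hc H P HPl. specialize (H P HPl).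
  destruct H as [Q R HQ HR HQR].
  destruct HQ as [eps HQ]. destruct HR as [M HR].
  assert (Hp : 0 < eps / c) by (apply Rdiv_lt_0_compat; [apply cond_pos|exact Hc]).
  apply Filter_prod with (Q := fun a => Q (c * a)) (R := fun b => R (c * b)).
  - exists (mkposreal _ Hp). intros y Hy Hy0. apply HQ.
    + rewrite ball_R in Hy |- *. rewrite Rminus_0_r in Hy |- *.
      assert (Hcy : 0 < c * y) by (apply Rmult_lt_0_compat; auto).
      rewrite (Rabs_pos_eq y) in Hy by lra. rewrite (Rabs_pos_eq (c * y)) by lra.
      apply Rmult_lt_compat_l with (r := c) in Hy; auto.
      change (c * y < c * (eps / c)) in Hy. replace (c * (eps / c)) with (pos eps) in Hy by (field; lra). exact Hy.
    + apply Rmult_lt_0_compat; auto.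
  - exists (M / c). intros x Hx. apply HR.
    apply Rmult_lt_compat_l with (r := c) in Hx; auto.
    replace (c * (M / c)) with M in Hx by (field; lra). exact Hx.
  - intros a b Ha Hb. destruct (HQR _ _ Ha Hb) as [y [Hy HPy]].
    exists y. split; auto. cbn [fst snd] in Hy |- *.
    apply (is_RInt_ext (fun x => scal c (f (c * x + 0)))).
    + intros x _. rewrite Rplus_0_r. reflexivity.
    + apply (is_RInt_comp_lin (V := R_NormedModule)). rewrite !Rplus_0_r. exact Hy.
Qed.

Lemma squeeze0 {F : (R -> Prop) -> Prop} {FF : Filter F} (f g : R -> R) :
  F (fun x => Rabs (f x) <= g x) -> filterlim g F (locally 0) -> filterlim f F (locally 0).
Proof.
  intros Hb Hg. apply (filterlim_locally (T := R_UniformSpace)). intros eps.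
  apply (proj1 (filterlim_locally (T := R_UniformSpace) g 0)) with (eps := eps) in Hg.
  eapply filter_imp; [|exact (filter_and _ _ Hb Hg)].
  intros x [H1 H2]. rewrite ball_R in H2 |- *. rewrite Rminus_0_r in *.
  eapply Rle_lt_trans; [|exact H2]. eapply Rle_trans; [exact H1|apply Rle_abs].
Qed.

Lemma exp_le' (x y : R) : x <= y -> exp x <= exp y.
Proof. intros H. destruct (Rle_lt_or_eq_dec _ _ H) as [H'|H'].
  - left; apply exp_increasing, H'. - subst; lra. Qed.

Lemma Rpower_pos (x p : R) : 0 < Rpower x p.
Proof. unfold Rpower. apply exp_pos. Qed.

Lemma growth (p e : R) : 0 < e -> exists K, 0 < K /\ forall t, 1 <= t -> Rpower t p <= K * exp (e * t).
Proof.
  intros He. set (q := Rabs p + 1). assert (Hq : 0 < q) by (unfold q; assert (H := Rabs_pos p); lra).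
  set (a := e / q). assert (Ha : 0 < a) by (unfold a; apply Rdiv_lt_0_compat; auto).
  exists (exp (- q * (1 + ln a))). split; [apply exp_pos|].
  intros t Ht.
  assert (Hlt : 0 <= ln t) by (rewrite <- ln_1; apply ln_le; lra).
  assert (H1 : ln (a * t) <= a * t - 1).
  { assert (H2 := exp_ineq1_le (a * t - 1)).
    rewrite <- (ln_exp (a * t - 1)). apply ln_le.
    - apply Rmult_lt_0_compat; lra.
    - lra. }
  rewrite ln_mult in H1 by lra.
  assert (H3 : p * ln t <= q * ln t).
  { apply Rmult_le_compat_r; auto. unfold q. assert (H := Rle_abs p). lra. }
  assert (H4 : q * ln t <= e * t - q * (1 + ln a)).
  { replace e with (q * a) by (unfold a; field; lra).
    assert (H5 : q * (ln a + ln t) <= q * (a * t - 1)) by (apply Rmult_le_compat_l; lra).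
    nra. }
  unfold Rpower. rewrite <- exp_plus. apply exp_le'. lra.
Qed.

Lemma is_RInt_gen_ext_pos (f g : R -> R) (l : R) :
  (forall x, 0 < x -> f x = g x) ->
  is_RInt_gen f (at_right 0) (Rbar_locally p_infty) l ->
  is_RInt_gen g (at_right 0) (Rbar_locally p_infty) l.
Proof.
  intros He. apply is_RInt_gen_ext.
  apply Filter_prod with (Q := fun a => 0 < a) (R := fun b => 0 < b).
  - exists (mkposreal 1 Rlt_0_1). intros y _ Hy. exact Hy.
  - exists 0. intros y Hy. exact Hy.
  - intros a b Ha' Hb' x [Hx _]. apply He. cbn [fst snd] in Hx. eapply Rle_lt_trans; [|exact Hx].
    unfold Rmin; destruct Rle_dec; lra.
Qed.

Lemma is_RInt_gen_uniq (f g : R -> R) (l1 l2 : R) :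
  (forall x, 0 < x -> f x = g x) ->
  is_RInt_gen f (at_right 0) (Rbar_locally p_infty) l1 ->
  is_RInt_gen g (at_right 0) (Rbar_locally p_infty) l2 -> l1 = l2.
Proof.
  intros He H1 H2. apply (is_RInt_gen_ext_pos _ _ _ He) in H1.
  assert (E1 := is_RInt_gen_unique (V:=R_CompleteNormedModule) _ _ H1).
  assert (E2 := is_RInt_gen_unique (V:=R_CompleteNormedModule) _ _ H2). congruence.
Qed.

Lemma is_derive_pe (a c x : R) : 0 < x ->
  is_derive (fun y => Rpower y a * exp (- c * y)) x
    (a * Rpower x (a - 1) * exp (- c * x) + Rpower x a * (- c * exp (- c * x))).
Proof.
  intros Hx. apply (is_derive_mult (K := R_AbsRing) (fun y => Rpower y a) (fun y => exp (- c * y))).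
  - apply is_derive_Rpower, Hx.
  - auto_derive; auto. ring.
  - intros; apply Rmult_comm.
Qed.

Lemma continuous_pe (a c x : R) : 0 < x -> continuous (fun y => Rpower y a * exp (- c * y)) x.
Proof. intros Hx. apply (@ex_derive_continuous R_AbsRing R_NormedModule). eexists. apply is_derive_pe, Hx. Qed.

Lemma ex_int_std (a c n0 M0 M1 d : R) (h : R -> R) :
  0 < c -> -1 < a + n0 -> 0 < d ->
  (forall x, 0 < x -> continuous h x) ->
  (forall x, 0 < x < d -> Rabs (h x) <= M0 * Rpower x n0) ->
  (forall x, 1 <= x -> Rabs (h x) <= M1) ->
  exists l, is_RInt_gen (fun x => Rpower x a * exp (- c * x) * h x) (at_right 0) (Rbar_locally p_infty) l.
Proof.
  intros Hc Han Hd Hhc H0 H1.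
  assert (Hc2 : 0 < c / 2) by lra.
  destruct (growth a (c / 2) Hc2) as [K [HK HKb]].
  apply (ex_int _ M0 (a + n0) d (K * M1) (c / 2)); auto.
  - intros x Hx. apply (continuous_mult (K := R_AbsRing) (fun y => Rpower y a * exp (- c * y)) h).
    + apply continuous_pe, Hx.
    + apply Hhc, Hx.
  - intros x Hx. rewrite Rabs_mult, Rabs_mult.
    rewrite (Rabs_pos_eq (Rpower x a)) by (left; apply Rpower_pos).
    rewrite (Rabs_pos_eq (exp _)) by (left; apply exp_pos).
    rewrite Rpower_plus.
    assert (He : exp (- c * x) <= 1) by (rewrite <- exp_0; apply exp_le'; nra).
    assert (Hp := Rpower_pos x a). assert (Ha := Rabs_pos (h x)).
    assert (Hh := H0 x Hx).
    apply Rle_trans with (Rpower x a * 1 * Rabs (h x)).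
    + apply Rmult_le_compat_r; auto. apply Rmult_le_compat_l; lra.
    + rewrite Rmult_1_r. replace (M0 * (Rpower x a * Rpower x n0)) with (Rpower x a * (M0 * Rpower x n0)) by ring.
      apply Rmult_le_compat_l; lra.
  - intros x Hx. rewrite Rabs_mult, Rabs_mult.
    rewrite (Rabs_pos_eq (Rpower x a)) by (left; apply Rpower_pos).
    rewrite (Rabs_pos_eq (exp _)) by (left; apply exp_pos).
    assert (Hg := HKb x Hx). assert (Hh := H1 x Hx).
    assert (Ha := Rabs_pos (h x)). assert (Hp := Rpower_pos x a).
    assert (He := exp_pos (- c * x)).
    replace (K * M1 * exp (- (c / 2) * x)) with (K * exp (c / 2 * x) * exp (- c * x) * M1).
    + apply Rmult_le_compat; [nra|lra| |lra].
      apply Rmult_le_compat_r; lra.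
    + assert (E : - (c / 2) * x = c / 2 * x + - c * x) by field.
      rewrite E, exp_plus. ring.
Qed.

Lemma Gamma_is (s : R) : 0 < s ->
  is_RInt_gen (fun t => Rpower t (s - 1) * exp (- t)) (at_right 0) (Rbar_locally p_infty) (Gamma s).
Proof.
  intros Hs.
  destruct (ex_int_std (s - 1) 1 0 1 1 1 (fun _ => 1)) as [l Hl]; try lra.
  - intros; apply continuous_const.
  - intros x Hx. rewrite Rpower_O by lra. rewrite Rabs_R1. lra.
  - intros. rewrite Rabs_R1. lra.
  - assert (H : is_RInt_gen (fun t => Rpower t (s - 1) * exp (- t)) (at_right 0) (Rbar_locally p_infty) l).
    { eapply is_RInt_gen_ext_pos; [|exact Hl]. intros x _. cbv beta. rewrite Rmult_1_r. f_equal. f_equal. ring. }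
    unfold Gamma. rewrite (is_RInt_gen_unique (V:=R_CompleteNormedModule) _ _ H). exact H.
Qed.

Lemma is_derive_eq (f : R -> R) (x l l' : R) : is_derive f x l -> l = l' -> is_derive f x l'.
Proof. intros H ->. exact H. Qed.

Lemma lim0_gen (f : R -> R) (d M p : R) : 0 < d -> 0 < p ->
  (forall x, 0 < x < d -> Rabs (f x) <= M * Rpower x p) ->
  filterlim f (at_right 0) (locally 0).
Proof.
  intros Hd Hp Hb. apply squeeze0 with (g := fun x => M * Rpower x p).
  - exists (mkposreal _ Hd). intros y Hy Hy0. apply Hb. split; auto.
    rewrite ball_R in Hy. simpl in Hy. apply Rabs_lt_between in Hy. lra.
  - replace 0 with (M * 0) at 2 by ring. apply filterlim_scal_l', lim_Rpower_0, Hp.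
Qed.

Lemma liminf_gen (f : R -> R) (M e : R) : 0 < e ->
  (forall x, 1 <= x -> Rabs (f x) <= M * exp (- e * x)) ->
  filterlim f (Rbar_locally p_infty) (locally 0).
Proof.
  intros He Hb. apply squeeze0 with (g := fun x => M * exp (- e * x)).
  - exists 1. intros y Hy. apply Hb. lra.
  - assert (L := filterlim_scal_l' _ M 0 (lim_exp_neg e He)). rewrite Rmult_0_r in L. exact L.
Qed.

Lemma bound0_pe (a c n0 M0 d x : R) (h : R -> R) : 0 < c -> 0 < x < d ->
  (forall x, 0 < x < d -> Rabs (h x) <= M0 * Rpower x n0) ->
  Rabs (Rpower x a * exp (- c * x) * h x) <= M0 * Rpower x (a + n0).
Proof.
  intros Hc Hx H0. rewrite Rabs_mult, Rabs_mult.
  rewrite (Rabs_pos_eq (Rpower x a)) by (left; apply Rpower_pos).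
  rewrite (Rabs_pos_eq (exp _)) by (left; apply exp_pos).
  rewrite Rpower_plus.
  assert (He : exp (- c * x) <= 1) by (rewrite <- exp_0; apply exp_le'; nra).
  assert (Hp := Rpower_pos x a). assert (Ha := Rabs_pos (h x)).
  assert (Hh := H0 x Hx).
  apply Rle_trans with (Rpower x a * 1 * Rabs (h x)).
  + apply Rmult_le_compat_r; auto. apply Rmult_le_compat_l; lra.
  + rewrite Rmult_1_r. replace (M0 * (Rpower x a * Rpower x n0)) with (Rpower x a * (M0 * Rpower x n0)) by ring.
    apply Rmult_le_compat_l; lra.
Qed.

Lemma boundinf_pe (a c M1 : R) (h : R -> R) : 0 < c ->
  (forall x, 1 <= x -> Rabs (h x) <= M1) ->
  exists K, forall x, 1 <= x -> Rabs (Rpower x a * exp (- c * x) * h x) <= K * exp (- (c / 2) * x).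
Proof.
  intros Hc H1.
  assert (Hc2 : 0 < c / 2) by lra.
  destruct (growth a (c / 2) Hc2) as [K [HK HKb]].
  exists (K * M1). intros x Hx.
  rewrite Rabs_mult, Rabs_mult.
  rewrite (Rabs_pos_eq (Rpower x a)) by (left; apply Rpower_pos).
  rewrite (Rabs_pos_eq (exp _)) by (left; apply exp_pos).
  assert (Hg := HKb x Hx). assert (Hh := H1 x Hx).
  assert (Ha := Rabs_pos (h x)). assert (Hp := Rpower_pos x a).
  assert (He := exp_pos (- c * x)).
  replace (K * M1 * exp (- (c / 2) * x)) with (K * exp (c / 2 * x) * exp (- c * x) * M1).
  + apply Rmult_le_compat; [nra|lra| |lra].
    apply Rmult_le_compat_r; lra.
  + assert (E : - (c / 2) * x = c / 2 * x + - c * x) by field.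
    rewrite E, exp_plus. ring.
Qed.

Lemma Gamma_rec (s : R) : 0 < s -> Gamma (s + 1) = s * Gamma s.
Proof.
  intros Hs.
  assert (H0 := Gamma_is s Hs). assert (H1 := Gamma_is (s + 1) ltac:(lra)).
  replace (s + 1 - 1) with s in H1 by ring.
  set (H := fun t => Rpower t s * exp (- (1) * t) * (fun _ => -1) t).
  assert (Hd : forall x, 0 < x -> is_derive H x
      (s * Rpower x (s - 1) * exp (- x) * (-1) + Rpower x s * exp (- x))).
  { intros x Hx. unfold H. cbv beta.
    apply (is_derive_eq _ _ (scal (- 1) ((s * Rpower x (s - 1) * exp (- (1) * x) + Rpower x s * (- (1) * exp (- (1) * x)))))).
    - apply is_derive_ext with (f := fun t => scal (-1) (Rpower t s * exp (- (1) * t))).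
      + intros t. unfold scal; simpl; unfold mult; simpl. ring.
      + apply (is_derive_scal (fun t => Rpower t s * exp (- (1) * t))). apply is_derive_pe, Hx.
    - unfold scal; simpl; unfold mult; simpl. replace (- (1) * x) with (- x) by ring. ring. }
  assert (HI : is_RInt_gen (fun x => s * Rpower x (s - 1) * exp (- x) * (-1) + Rpower x s * exp (- x))
                 (at_right 0) (Rbar_locally p_infty) (0 - 0)).
  { apply is_RInt_gen_prim with (H := H); auto.
    - intros x Hx. apply (@ex_derive_continuous R_AbsRing R_NormedModule).
      unfold Rpower. auto_derive. auto.
    - apply (lim0_gen _ 1 1 s); try lra.
      intros x Hx. unfold H. eapply Rle_trans; [apply (bound0_pe s 1 0 1 1 x (fun _ => -1)); try lra|].
      + intros y Hy. rewrite Rpower_O by lra. rewrite Rabs_m1. lra.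
      + rewrite Rplus_0_r. lra.
    - destruct (boundinf_pe s 1 1 (fun _ => -1)) as [K HK]; try lra.
      { intros. rewrite Rabs_m1. lra. }
      apply (liminf_gen _ K (1 / 2)); try lra. exact HK. }
  assert (HJ := is_RInt_gen_minus (V := R_NormedModule) _ _ _ _ H1 (is_RInt_gen_scal _ s _ H0)).
  assert (E : 0 - 0 = minus (Gamma (s + 1)) (scal s (Gamma s))).
  { eapply is_RInt_gen_uniq; [|exact HI|exact HJ].
    intros x _. cbv beta. unfold minus, plus, opp, scal; simpl. unfold mult; simpl. ring. }
  unfold minus, plus, opp, scal in E. simpl in E. unfold mult in E. simpl in E. lra.
Qed.

Lemma pe_is (a c : R) : -1 < a -> 0 < c ->
  is_RInt_gen (fun x => Rpower x a * exp (- c * x)) (at_right 0) (Rbar_locally p_infty)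
    (Gamma (a + 1) / Rpower c (a + 1)).
Proof.
  intros Ha Hc.
  assert (H := is_RInt_gen_scale _ _ c Hc (Gamma_is (a + 1) ltac:(lra))).
  assert (H2 := H). eapply (is_RInt_gen_scal (V := R_NormedModule)) with (k := / Rpower c (a + 1)) in H2.
  replace (Gamma (a + 1) / Rpower c (a + 1)) with (scal (/ Rpower c (a + 1)) (Gamma (a + 1)))
    by (unfold scal; simpl; unfold mult; simpl; unfold Rdiv; ring).
  eapply is_RInt_gen_ext_pos; [|exact H2].
  intros x Hx. cbv beta. unfold scal; simpl; unfold mult; simpl.
  replace (a + 1 - 1) with a by ring.
  rewrite <- Rpower_mult_distr by lra. rewrite Rpower_plus, Rpower_1 by lra.
  assert (Hp := Rpower_pos c a).
  replace (- (c * x)) with (- c * x) by ring. field. lra.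
Qed.


Definition bc (nu : R) (m : nat) : R := (-1) ^ m / (INR (Factorial.fact m) * Gamma (INR m + nu + 1)).

Lemma bc_S (nu : R) (m : nat) : 0 <= nu ->
  bc nu (S m) = - bc nu m / ((INR m + 1) * (INR m + nu + 1)).
Proof.
  intros Hnu. unfold bc.
  rewrite fact_simpl, mult_INR, S_INR.
  replace (INR m + 1 + nu + 1) with ((INR m + nu + 1) + 1) by ring.
  rewrite Gamma_rec by (assert (H := pos_INR m); lra).
  unfold Rdiv. rewrite !Rinv_mult. simpl. ring.
Qed.

Lemma bc_bound (nu : R) (n : nat) : 0 <= nu -> Rabs (bc nu n) <= Rabs (bc nu 0) / INR (Factorial.fact n).
Proof.
  intros Hnu. induction n as [|n IH].
  - simpl. lra.
  - rewrite bc_S by auto. rewrite fact_simpl, mult_INR, S_INR.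
    assert (Hn := pos_INR n). assert (Hf := INR_fact_lt_0 n).
    unfold Rdiv. rewrite Rabs_mult, Rabs_Ropp, Rabs_Rinv, Rabs_mult.
    rewrite (Rabs_pos_eq (INR n + 1)) by lra. rewrite (Rabs_pos_eq (INR n + nu + 1)) by lra.
    rewrite Rinv_mult, Rinv_mult.
    assert (H1 : / (INR n + nu + 1) <= 1).
    { rewrite <- Rinv_1. apply Rinv_le_contravar; lra. }
    assert (H2 : 0 < / (INR n + 1)) by (apply Rinv_0_lt_compat; lra).
    assert (H3 : 0 < / (INR n + nu + 1)) by (apply Rinv_0_lt_compat; lra).
    assert (H4 : 0 <= Rabs (bc nu n)) by apply Rabs_pos.
    unfold Rdiv in IH.
    apply Rle_trans with (Rabs (bc nu n) * / (INR n + 1)).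
    + apply Rle_trans with (Rabs (bc nu n) * / (INR n + 1) * 1); [|lra].
      replace (Rabs (bc nu n) * (/ (INR n + 1) * / (INR n + nu + 1))) with
        (Rabs (bc nu n) * / (INR n + 1) * / (INR n + nu + 1)) by ring.
      apply Rmult_le_compat_l; [apply Rmult_le_pos; lra|exact H1].
    + replace (Rabs (bc nu 0) * (/ (INR n + 1) * / INR (Factorial.fact n))) with
        (Rabs (bc nu 0) * / INR (Factorial.fact n) * / (INR n + 1)) by ring.
      apply Rmult_le_compat_r; lra.
    + apply Rmult_integral_contrapositive_currified; lra.
Qed.

Lemma pow_fact_le_exp (x : R) (n : nat) : 0 <= x -> x ^ n / INR (Factorial.fact n) <= exp x.
Proof.
  intros Hx. eapply Rle_trans; [|apply (exp_ge_taylor x n Hx)].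
  destruct n as [|n].
  - right. reflexivity.
  - cbn [sum_f_R0]. assert (0 <= sum_f_R0 (fun k => x ^ k / INR (Factorial.fact k)) n).
    { apply cond_pos_sum. intros k. apply Rdiv_le_0_compat; [apply pow_le, Hx|apply INR_fact_lt_0]. }
    lra.
Qed.

Lemma bc_radius (nu : R) (x : R) : 0 <= nu -> Rbar_lt (Rabs x) (CV_radius (bc nu)).
Proof.
  intros Hnu. set (r := Rabs x + 1).
  assert (Hr : Rbar_le r (CV_radius (bc nu))).
  { destruct (CV_radius_bounded (bc nu)) as [Hub _]. apply Hub.
    exists (Rabs (bc nu 0) * exp (Rabs r)). intros n.
    rewrite Rabs_mult, <- RPow_abs.
    eapply Rle_trans; [apply Rmult_le_compat_r; [apply pow_le, Rabs_pos|apply bc_bound, Hnu]|].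
    replace (Rabs (bc nu 0) / INR (Factorial.fact n) * Rabs r ^ n) with (Rabs (bc nu 0) * (Rabs r ^ n / INR (Factorial.fact n))) by (unfold Rdiv; ring).
    apply Rmult_le_compat_l; [apply Rabs_pos|]. apply pow_fact_le_exp, Rabs_pos. }
  destruct (CV_radius (bc nu)) as [v| |]; simpl in *; auto. unfold r in Hr. lra.
Qed.

Definition P0 (nu z : R) := PSeries (bc nu) z.
Definition P1 (nu z : R) := PSeries (PS_derive (bc nu)) z.
Definition P2 (nu z : R) := PSeries (PS_derive (PS_derive (bc nu))) z.

Lemma P0_deriv (nu z : R) : 0 <= nu -> is_derive (P0 nu) z (P1 nu z).
Proof. intros Hnu. apply is_derive_PSeries, bc_radius, Hnu. Qed.

Lemma P1_deriv (nu z : R) : 0 <= nu -> is_derive (P1 nu) z (P2 nu z).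
Proof. intros Hnu. apply is_derive_PSeries. rewrite CV_radius_derive. apply bc_radius, Hnu. Qed.

Lemma P_ode (nu z : R) : 0 <= nu -> z * P2 nu z + (nu + 1) * P1 nu z + P0 nu z = 0.
Proof.
  intros Hnu. unfold P0, P1, P2.
  assert (E0 : ex_pseries (bc nu) z) by (apply CV_radius_inside, bc_radius, Hnu).
  assert (E1 : ex_pseries (PS_derive (bc nu)) z) by (apply CV_radius_inside; rewrite CV_radius_derive; apply bc_radius, Hnu).
  assert (E2 : ex_pseries (PS_derive (PS_derive (bc nu))) z) by (apply CV_radius_inside; rewrite !CV_radius_derive; apply bc_radius, Hnu).
  assert (F2 : ex_pseries (PS_incr_1 (PS_derive (PS_derive (bc nu)))) z) by (apply ex_pseries_incr_1, E2).
  assert (F1 : ex_pseries (PS_scal (nu + 1) (PS_derive (bc nu))) z).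
  { apply (ex_pseries_scal (K := R_AbsRing)); [apply Rmult_comm|exact E1]. }
  rewrite <- PSeries_incr_1, <- PSeries_scal.
  rewrite <- (PSeries_plus _ _ z F2 F1).
  rewrite <- (PSeries_plus _ _ z (ex_pseries_plus _ _ _ F2 F1) E0).
  rewrite <- (PSeries_const_0 z). apply PSeries_ext. intros n.
  unfold PS_plus, PS_scal, PS_incr_1, PS_derive.
  destruct n as [|k].
  - rewrite bc_S by auto. rewrite ?S_INR. unfold zero, plus, scal, mult; simpl. unfold mult; simpl. field. lra.
  - rewrite (bc_S nu (S k)) by auto. rewrite !S_INR. unfold zero, plus, scal, mult; simpl. unfold mult; simpl.
    assert (H := pos_INR k). field. lra.
Qed.

Definition Jf (nu x : R) := Rpower (x / 2) nu * P0 nu ((x / 2) ^ 2).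
Definition J1f (nu x : R) := Rpower (x / 2) nu * (nu / x * P0 nu ((x / 2) ^ 2) + x / 2 * P1 nu ((x / 2) ^ 2)).
Definition J2f (nu x : R) := Rpower (x / 2) nu *
  ((nu ^ 2 - nu) / x ^ 2 * P0 nu ((x / 2) ^ 2) + (nu + 1 / 2) * P1 nu ((x / 2) ^ 2)
   + (x / 2) ^ 2 * P2 nu ((x / 2) ^ 2)).

Lemma BesselJ_eq (nu x : R) : BesselJ nu x = Jf nu x.
Proof.
  unfold BesselJ, Jf, P0, PSeries. f_equal. apply Series_ext. intros n.
  rewrite pow_mult. reflexivity.
Qed.

Lemma J_deriv (nu x : R) : 0 <= nu -> 0 < x -> is_derive (Jf nu) x (J1f nu x).
Proof.
  intros Hnu Hx. unfold Jf, J1f, Rpower.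
  auto_derive.
  - repeat split; try lra. eexists; apply P0_deriv, Hnu.
  - rewrite (is_derive_unique _ _ _ (P0_deriv nu _ Hnu)). unfold Rdiv.
    replace (x * / 2 * (x * / 2 * 1)) with ((x * / 2) ^ 2) by ring. field. lra.
Qed.

Lemma J1_deriv (nu x : R) : 0 <= nu -> 0 < x -> is_derive (J1f nu) x (J2f nu x).
Proof.
  intros Hnu Hx. unfold J1f, J2f, Rpower.
  auto_derive.
  - repeat split; try lra; eexists; [apply P0_deriv, Hnu|apply P1_deriv, Hnu].
  - rewrite (is_derive_unique _ _ _ (P0_deriv nu _ Hnu)).
    rewrite (is_derive_unique _ _ _ (P1_deriv nu _ Hnu)). unfold Rdiv.
    replace (x * / 2 * (x * / 2 * 1)) with ((x * / 2) ^ 2) by ring. field. lra.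
Qed.

Lemma J_ode (nu x : R) : 0 <= nu -> 0 < x ->
  x ^ 2 * J2f nu x + x * J1f nu x + (x ^ 2 - nu ^ 2) * Jf nu x = 0.
Proof.
  intros Hnu Hx. unfold Jf, J1f, J2f.
  assert (H := P_ode nu ((x / 2) ^ 2) Hnu).
  set (a := P0 nu ((x / 2) ^ 2)) in *. set (b := P1 nu ((x / 2) ^ 2)) in *.
  set (c := P2 nu ((x / 2) ^ 2)) in *.
  replace (x ^ 2 * (Rpower (x / 2) nu * ((nu ^ 2 - nu) / x ^ 2 * a + (nu + 1 / 2) * b + (x / 2) ^ 2 * c)) +
   x * (Rpower (x / 2) nu * (nu / x * a + x / 2 * b)) + (x ^ 2 - nu ^ 2) * (Rpower (x / 2) nu * a))
   with (Rpower (x / 2) nu * x ^ 2 * ((x / 2) ^ 2 * c + (nu + 1) * b + a)) by (field; lra).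
  rewrite H. ring.
Qed.

Lemma cont_bound0 (f : R -> R) : continuous f 0 ->
  exists d, 0 < d /\ forall z, Rabs z < d -> Rabs (f z) <= Rabs (f 0) + 1.
Proof.
  intros Hc. apply continuity_pt_filterlim in Hc.
  rewrite continuity_pt_locally in Hc. destruct (Hc (mkposreal 1 Rlt_0_1)) as [d Hd].
  exists d. split; [apply cond_pos|]. intros z Hz.
  assert (H := Hd z). rewrite ball_R, Rminus_0_r in H. specialize (H Hz). simpl in H.
  assert (H2 := Rabs_triang_inv (f z) (f 0)). lra.
Qed.

Lemma Rpower_half_le (x nu : R) : 0 <= nu -> 0 < x -> Rpower (x / 2) nu <= Rpower x nu.
Proof.
  intros Hnu Hx. destruct (Rle_lt_or_eq_dec _ _ Hnu) as [H|H].
  - left. apply Rlt_Rpower_l; lra.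
  - subst. rewrite !Rpower_O; lra.
Qed.

Lemma J_bound0 (nu : R) : 0 <= nu -> exists d M, 0 < d /\ d <= 1 /\ forall x, 0 < x < d ->
  Rabs (Jf nu x) <= M * Rpower x nu /\ Rabs (J1f nu x) <= M * Rpower x (nu - 1).
Proof.
  intros Hnu.
  destruct (cont_bound0 (P0 nu)) as [d0 [Hd0 H0]].
  { apply (@ex_derive_continuous R_AbsRing R_NormedModule). eexists; apply P0_deriv, Hnu. }
  destruct (cont_bound0 (P1 nu)) as [d1 [Hd1 H1]].
  { apply (@ex_derive_continuous R_AbsRing R_NormedModule). eexists; apply P1_deriv, Hnu. }
  set (A := Rabs (P0 nu 0) + 1 + (Rabs (P1 nu 0) + 1)).
  exists (Rmin 1 (Rmin d0 d1)), ((nu + 1) * A). refine (conj _ (conj _ _)).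
  - apply Rmin_glb_lt; [lra|apply Rmin_glb_lt; auto].
  - apply Rmin_l.
  - intros x [Hx Hxd].
    assert (Hx1 : x < 1) by (eapply Rlt_le_trans; [exact Hxd|apply Rmin_l]).
    assert (Hx0 : x < d0) by (eapply Rlt_le_trans; [exact Hxd|]; eapply Rle_trans; [apply Rmin_r|apply Rmin_l]).
    assert (Hx1' : x < d1) by (eapply Rlt_le_trans; [exact Hxd|]; eapply Rle_trans; [apply Rmin_r|apply Rmin_r]).
    assert (Hz : Rabs ((x / 2) ^ 2) < x).
    { rewrite Rabs_pos_eq by (apply pow_le; lra). simpl. nra. }
    assert (B0 := H0 ((x / 2) ^ 2) ltac:(lra)). assert (B1 := H1 ((x / 2) ^ 2) ltac:(lra)).
    assert (HA0 : Rabs (P0 nu ((x / 2) ^ 2)) <= A) by (unfold A; assert (Rabs (P1 nu 0) >= 0) by (apply Rle_ge, Rabs_pos); lra).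
    assert (HA1 : Rabs (P1 nu ((x / 2) ^ 2)) <= A) by (unfold A; assert (Rabs (P0 nu 0) >= 0) by (apply Rle_ge, Rabs_pos); lra).
    assert (HAp : 0 <= A) by (eapply Rle_trans; [apply Rabs_pos|exact HA0]).
    assert (Hr := Rpower_half_le x nu Hnu Hx). assert (Hrp := Rpower_pos (x / 2) nu).
    assert (Ern : Rpower x nu = Rpower x (nu - 1) * x).
    { rewrite <- (Rpower_1 x) at 3 by lra. rewrite <- Rpower_plus. f_equal. ring. }
    assert (Hr1 := Rpower_pos x (nu - 1)).
    unfold Jf, J1f. rewrite Rabs_mult, (Rabs_pos_eq (Rpower (x / 2) nu)) by lra.
    rewrite Rabs_mult, (Rabs_pos_eq (Rpower (x / 2) nu)) by lra.
    split.
    + apply Rle_trans with (Rpower x nu * A).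
      * apply Rmult_le_compat; try lra. apply Rabs_pos.
      * assert (0 <= nu * (A * Rpower x nu)) by (apply Rmult_le_pos; [lra|apply Rmult_le_pos; lra]).
        replace ((nu + 1) * A * Rpower x nu) with (Rpower x nu * A + nu * (A * Rpower x nu)) by ring. lra.
    + assert (Hs : Rabs (nu / x * P0 nu ((x / 2) ^ 2) + x / 2 * P1 nu ((x / 2) ^ 2)) <= nu / x * A + x / 2 * A).
      { eapply Rle_trans; [apply Rabs_triang|]. rewrite !Rabs_mult.
        rewrite (Rabs_pos_eq (nu / x)) by (apply Rdiv_le_0_compat; lra).
        rewrite (Rabs_pos_eq (x / 2)) by lra.
        apply Rplus_le_compat; apply Rmult_le_compat_l; try lra. apply Rdiv_le_0_compat; lra. }
      apply Rle_trans with (Rpower x nu * (nu / x * A + x / 2 * A)).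
      * apply Rmult_le_compat; try lra. apply Rabs_pos.
      * rewrite Ern. replace (Rpower x (nu - 1) * x * (nu / x * A + x / 2 * A)) with
          (Rpower x (nu - 1) * A * (nu + x * x / 2)) by (field; lra).
        replace ((nu + 1) * A * Rpower x (nu - 1)) with (Rpower x (nu - 1) * A * (nu + 1)) by ring.
        apply Rmult_le_compat_l; [apply Rmult_le_pos; lra|]. nra.
Qed.

Definition Gen (nu x : R) := (J1f nu x ^ 2 + Jf nu x ^ 2) * exp (nu ^ 2 / x).

Lemma Gen_deriv (nu x : R) : 0 <= nu -> 0 < x ->
  is_derive (Gen nu) x (exp (nu ^ 2 / x) * (- 2 * J1f nu x ^ 2 / x - nu ^ 2 * (J1f nu x - Jf nu x) ^ 2 / x ^ 2)).
Proof.
  intros Hnu Hx. unfold Gen. auto_derive.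
  - repeat split; try lra; eexists; [apply J1_deriv; auto|apply J_deriv; auto].
    replace (Derive (fun x0 => J1f nu x0) x) with (J2f nu x) by (symmetry; apply is_derive_unique, J1_deriv; auto).
    replace (Derive (fun x0 => Jf nu x0) x) with (J1f nu x) by (symmetry; apply is_derive_unique, J_deriv; auto).
    replace (nu * (nu * 1) * / x) with (nu ^ 2 / x) by (unfold Rdiv; ring).
    assert (H := J_ode nu x Hnu Hx).
    assert (E : J2f nu x = - (x * J1f nu x + (x ^ 2 - nu ^ 2) * Jf nu x) / x ^ 2).
    { field_simplify; [|lra]. apply Rmult_eq_reg_r with (x ^ 2); [|apply pow_nonzero; lra].
      field_simplify; [|lra]. lra. }
    rewrite E. field. lra.
Qed.

Lemma J_bound_inf (nu : R) : 0 <= nu -> exists M, forall x, 1 <= x ->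
  Rabs (Jf nu x) <= M /\ Rabs (J1f nu x) <= M.
Proof.
  intros Hnu. exists (1 + Gen nu 1). intros x Hx.
  assert (HG : Gen nu x <= Gen nu 1).
  { destruct (Rle_lt_or_eq_dec _ _ Hx) as [Hx'|Hx']; [|subst; lra].
    destruct (MVT_gen (Gen nu) 1 x (fun y => exp (nu ^ 2 / y) * (- 2 * J1f nu y ^ 2 / y - nu ^ 2 * (J1f nu y - Jf nu y) ^ 2 / y ^ 2)))
      as [c [Hc E]].
    - intros y Hy. rewrite Rmin_left, Rmax_right in Hy by lra. apply Gen_deriv; auto; lra.
    - intros y Hy. rewrite Rmin_left, Rmax_right in Hy by lra.
      apply continuity_pt_filterlim. apply (@ex_derive_continuous R_AbsRing R_NormedModule).
      eexists. apply Gen_deriv; auto; lra.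
    - rewrite Rmin_left, Rmax_right in Hc by lra.
      assert (Hc0 : 0 < c) by lra.
      assert (Hneg : - 2 * J1f nu c ^ 2 / c - nu ^ 2 * (J1f nu c - Jf nu c) ^ 2 / c ^ 2 <= 0).
      { assert (0 <= J1f nu c ^ 2 / c) by (apply Rdiv_le_0_compat; [apply pow2_ge_0|lra]).
        assert (0 <= nu ^ 2 * (J1f nu c - Jf nu c) ^ 2 / c ^ 2).
        { apply Rdiv_le_0_compat; [apply Rmult_le_pos; apply pow2_ge_0|apply pow_lt; lra]. }
        unfold Rdiv in *. lra. }
      assert (0 < exp (nu ^ 2 / c)) by apply exp_pos.
      assert (exp (nu ^ 2 / c) * (- 2 * J1f nu c ^ 2 / c - nu ^ 2 * (J1f nu c - Jf nu c) ^ 2 / c ^ 2) * (x - 1) <= 0).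
      { apply Rmult_le_0_r; [|lra]. apply Rmult_le_0_l; lra. }
      lra. }
  assert (He : 1 <= exp (nu ^ 2 / x)).
  { rewrite <- exp_0. apply exp_le'. apply Rdiv_le_0_compat; [apply pow2_ge_0|lra]. }
  assert (HF : J1f nu x ^ 2 + Jf nu x ^ 2 <= Gen nu x).
  { unfold Gen. assert (0 <= J1f nu x ^ 2 + Jf nu x ^ 2) by (assert (H1 := pow2_ge_0 (J1f nu x)); assert (H2 := pow2_ge_0 (Jf nu x)); lra).
    nra. }
  assert (Ha : forall y, Rabs y <= 1 + y ^ 2).
  { intros y. destruct (Rle_dec 0 y); [rewrite Rabs_pos_eq by lra|rewrite Rabs_left by lra]; nra. }
  assert (H1 := pow2_ge_0 (J1f nu x)). assert (H2 := pow2_ge_0 (Jf nu x)).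
  assert (A1 := Ha (J1f nu x)). assert (A2 := Ha (Jf nu x)).
  split; lra.
Qed.


Lemma Jf_cont (nu x : R) : 0 <= nu -> 0 < x -> continuous (Jf nu) x.
Proof. intros. apply (@ex_derive_continuous R_AbsRing R_NormedModule). eexists. apply J_deriv; auto. Qed.

Lemma J1f_cont (nu x : R) : 0 <= nu -> 0 < x -> continuous (J1f nu) x.
Proof. intros. apply (@ex_derive_continuous R_AbsRing R_NormedModule). eexists. apply J1_deriv; auto. Qed.

Definition mJ (nu c p : R) := RInt_gen (fun x => Rpower x p * exp (- c * x) * Jf nu x) (at_right 0) (Rbar_locally p_infty).

Lemma mJ_is (nu c p : R) : 0 <= nu -> 0 < c -> -1 < p ->
  is_RInt_gen (fun x => Rpower x p * exp (- c * x) * Jf nu x) (at_right 0) (Rbar_locally p_infty) (mJ nu c p).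
Proof.
  intros Hnu Hc Hp.
  destruct (J_bound0 nu Hnu) as [d [M [Hd [Hd1 HB0]]]].
  destruct (J_bound_inf nu Hnu) as [M1 HB1].
  destruct (ex_int_std p c nu M M1 d (Jf nu)) as [l Hl]; auto; try lra.
  - intros x Hx. apply Jf_cont; auto.
  - intros x Hx. apply HB0, Hx.
  - intros x Hx. apply HB1, Hx.
  - unfold mJ. rewrite (is_RInt_gen_unique (V := R_CompleteNormedModule) _ _ Hl). exact Hl.
Qed.

Lemma boundary (nu c s : R) : 0 <= nu -> 0 < c -> 0 < s ->
  is_RInt_gen (fun x => Rpower x (s + 1) * exp (- c * x) *
     (((s ^ 2 - nu ^ 2) / x ^ 2 - c * (2 * s + 1) / x + (c ^ 2 + 1)) * Jf nu x))
    (at_right 0) (Rbar_locally p_infty) (0 - 0).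
Proof.
  intros Hnu Hc Hs.
  set (h := fun x => J1f nu x + (c - s / x) * Jf nu x).
  apply is_RInt_gen_prim with (H := fun x => - (Rpower x (s + 1) * exp (- c * x) * h x)).
  - intros x Hx. unfold h, Rpower. auto_derive.
    + repeat split; try lra; eexists; [apply J1_deriv; auto|apply J_deriv; auto].
    + replace (Derive (fun x0 => J1f nu x0) x) with (J2f nu x) by (symmetry; apply is_derive_unique, J1_deriv; auto).
      replace (Derive (fun x0 => Jf nu x0) x) with (J1f nu x) by (symmetry; apply is_derive_unique, J_deriv; auto).
      assert (H := J_ode nu x Hnu Hx).
      assert (E : J2f nu x = - (x * J1f nu x + (x ^ 2 - nu ^ 2) * Jf nu x) / x ^ 2).
      { field_simplify; [|lra]. apply Rmult_eq_reg_r with (x ^ 2); [|apply pow_nonzero; lra].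
        field_simplify; [|lra]. lra. }
      rewrite E. field. lra.
  - intros x Hx. apply (@ex_derive_continuous R_AbsRing R_NormedModule). unfold Rpower. auto_derive.
    repeat split; try lra; try (eexists; apply J_deriv; auto; fail).
    repeat apply Rmult_integral_contrapositive_currified; lra.
  - destruct (J_bound0 nu Hnu) as [d [M [Hd [Hd1 HB0]]]].
    apply (lim0_gen _ d ((1 + c + s) * M) (s + nu)); auto; try lra.
    intros x Hx. rewrite Rabs_Ropp.
    replace (s + nu) with (s + 1 + (nu - 1)) by ring.
    apply (bound0_pe (s + 1) c (nu - 1) ((1 + c + s) * M) d x h); auto.
    intros y Hy. destruct (HB0 y Hy) as [B1 B2]. unfold h.
    assert (HM : 0 <= M) by (eapply Rmult_le_reg_r; [apply (Rpower_pos y nu)|]; rewrite Rmult_0_l; eapply Rle_trans; [apply Rabs_pos|exact B1]).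
    assert (Ern : Rpower y nu = Rpower y (nu - 1) * y).
    { rewrite <- (Rpower_1 y) at 3 by lra. rewrite <- Rpower_plus. f_equal. ring. }
    assert (Hr := Rpower_pos y (nu - 1)).
    eapply Rle_trans; [apply Rabs_triang|]. rewrite Rabs_mult.
    assert (Hcs : Rabs (c - s / y) <= c + s / y).
    { eapply Rle_trans; [apply Rabs_triang|]. rewrite Rabs_Ropp, Rabs_pos_eq by lra.
      rewrite Rabs_pos_eq by (apply Rdiv_le_0_compat; lra). lra. }
    assert (B3 : Rabs (c - s / y) * Rabs (Jf nu y) <= (c + s / y) * (M * Rpower y nu)).
    { apply Rmult_le_compat; auto; apply Rabs_pos. }
    rewrite Ern in B3.
    replace ((c + s / y) * (M * (Rpower y (nu - 1) * y))) with (M * Rpower y (nu - 1) * (c * y + s)) in B3 by (field; lra).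
    assert (M * Rpower y (nu - 1) * (c * y + s) <= M * Rpower y (nu - 1) * (c + s)).
    { apply Rmult_le_compat_l; [apply Rmult_le_pos; lra|]. nra. }
    assert (0 <= M * Rpower y (nu - 1)) by (apply Rmult_le_pos; lra).
    nra.
  - destruct (J_bound_inf nu Hnu) as [M1 HB1].
    destruct (boundinf_pe (s + 1) c (M1 + (c + s) * M1) h Hc) as [K HK].
    + intros x Hx. destruct (HB1 x Hx) as [B1 B2]. unfold h.
      eapply Rle_trans; [apply Rabs_triang|]. rewrite Rabs_mult.
      assert (Hcs : Rabs (c - s / x) <= c + s).
      { eapply Rle_trans; [apply Rabs_triang|]. rewrite Rabs_Ropp, Rabs_pos_eq by lra.
        rewrite Rabs_pos_eq by (apply Rdiv_le_0_compat; lra).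
        assert (s / x <= s). { apply Rmult_le_reg_r with x; [lra|]. field_simplify; nra. }
        lra. }
      assert (Rabs (c - s / x) * Rabs (Jf nu x) <= (c + s) * M1) by (apply Rmult_le_compat; auto; apply Rabs_pos).
      lra.
    + apply (liminf_gen _ K (c / 2)); try lra. intros x Hx. rewrite Rabs_Ropp. apply HK, Hx.
Qed.

Lemma mu_split (nu alpha c : R) (k : nat) : 0 <= nu -> -1 < alpha -> 0 < c ->
  mu nu alpha c k = mJ nu c (INR k + alpha) + Gamma (INR k + alpha + 1) / Rpower c (INR k + alpha + 1)
  /\ mu0 nu alpha c k = mJ nu c (INR k + alpha).
Proof.
  intros Hnu Ha Hc. assert (Hp : -1 < INR k + alpha) by (assert (H := pos_INR k); lra).
  assert (H1 := mJ_is nu c _ Hnu Hc Hp). assert (H2 := pe_is _ c Hp Hc).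
  split.
  - assert (H3 := is_RInt_gen_plus (V := R_NormedModule) _ _ _ _ H1 H2).
    assert (H4 : is_RInt_gen (fun x => Rpower x (INR k + alpha) * exp (- c * x) * (BesselJ nu x + 1)) (at_right 0) (Rbar_locally p_infty)
       (mJ nu c (INR k + alpha) + Gamma (INR k + alpha + 1) / Rpower c (INR k + alpha + 1))).
    { eapply is_RInt_gen_ext_pos; [|exact H3]. intros x _. unfold plus; simpl. rewrite BesselJ_eq. ring. }
    exact (is_RInt_gen_unique (V := R_CompleteNormedModule) _ _ H4).
  - unfold mu0. 
    assert (H4 : is_RInt_gen (fun x => Rpower x (INR k + alpha) * exp (- c * x) * BesselJ nu x) (at_right 0) (Rbar_locally p_infty) (mJ nu c (INR k + alpha))).
    { eapply is_RInt_gen_ext_pos; [|exact H1]. intros x _. rewrite BesselJ_eq. reflexivity. }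
    exact (is_RInt_gen_unique (V := R_CompleteNormedModule) _ _ H4).
Qed.

Lemma mJ_rec (nu c s : R) : 0 <= nu -> 0 < c -> 0 < s ->
  (c ^ 2 + 1) * mJ nu c (s + 1) - c * (2 * s + 1) * mJ nu c s + (s ^ 2 - nu ^ 2) * mJ nu c (s - 1) = 0.
Proof.
  intros Hnu Hc Hs.
  assert (A1 := mJ_is nu c (s + 1) Hnu Hc ltac:(lra)).
  assert (A2 := mJ_is nu c s Hnu Hc ltac:(lra)).
  assert (A3 := mJ_is nu c (s - 1) Hnu Hc ltac:(lra)).
  assert (S1 := A1). eapply (is_RInt_gen_scal (V := R_NormedModule)) with (k := c ^ 2 + 1) in S1.
  assert (S2 := A2). eapply (is_RInt_gen_scal (V := R_NormedModule)) with (k := - (c * (2 * s + 1))) in S2.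
  assert (S3 := A3). eapply (is_RInt_gen_scal (V := R_NormedModule)) with (k := s ^ 2 - nu ^ 2) in S3.
  assert (T := is_RInt_gen_plus (V := R_NormedModule) _ _ _ _ (is_RInt_gen_plus (V := R_NormedModule) _ _ _ _ S1 S2) S3).
  assert (B := boundary nu c s Hnu Hc Hs).
  assert (E : 0 - 0 = plus (plus (scal (c ^ 2 + 1) (mJ nu c (s + 1)))
          (scal (- (c * (2 * s + 1))) (mJ nu c s))) (scal (s ^ 2 - nu ^ 2) (mJ nu c (s - 1)))).
  { eapply is_RInt_gen_uniq; [|exact B|exact T].
    intros x Hx. cbv beta. unfold plus, scal; simpl; unfold mult; simpl.
    assert (R1 : Rpower x (s + 1) = Rpower x (s - 1) * x ^ 2).
    { replace (s + 1) with ((s - 1) + 1 + 1) by ring. rewrite !Rpower_plus, Rpower_1 by lra. ring. }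
    assert (R2 : Rpower x s = Rpower x (s - 1) * x).
    { replace s with ((s - 1) + 1) at 1 by ring. rewrite !Rpower_plus, Rpower_1 by lra. ring. }
    rewrite R1, R2. field. lra. }
  unfold plus, scal in E; simpl in E; unfold mult in E; simpl in E. lra.
Qed.

Theorem proposition3 (nu alpha c : R) (hnu : 0 <= nu) (halpha : -1 < alpha) (hc : 0 < c) :
  (forall k : nat, (1 <= k)%nat ->
     mu nu alpha c (S k) =
       / (c ^ 2 + 1) *
       ( c * (2 * (INR k + alpha) + 1) * mu nu alpha c k
         - ((INR k + alpha) ^ 2 - nu ^ 2) * mu nu alpha c (k - 1)
         + Gamma (INR k + alpha) * ((INR k + alpha) ^ 2 + (INR k + alpha) - c ^ 2 * nu ^ 2)
             / Rpower c (INR k + alpha + 2) ))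
  /\ mu nu alpha c 0 = mu0 nu alpha c 0 + Gamma (alpha + 1) / Rpower c (alpha + 1)
  /\ mu nu alpha c 1 = mu0 nu alpha c 1 + Gamma (alpha + 2) / Rpower c (alpha + 2).
Proof.
  split; [|split].
  - intros k Hk.
    destruct (mu_split nu alpha c (S k) hnu halpha hc) as [E1 _].
    destruct (mu_split nu alpha c k hnu halpha hc) as [E2 _].
    destruct (mu_split nu alpha c (k - 1) hnu halpha hc) as [E3 _].
    rewrite E1, E2, E3.
    assert (Hk' : INR (k - 1) = INR k - 1) by (rewrite minus_INR by lia; simpl; ring).
    rewrite Hk', S_INR.
    assert (Hs : 0 < INR k + alpha) by (apply le_INR in Hk; simpl in Hk; lra).
    set (s := INR k + alpha) in *.
    replace (INR k + 1 + alpha) with (s + 1) by (unfold s; ring).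
    replace (INR k - 1 + alpha) with (s - 1) by (unfold s; ring).
    replace (s + 1 + 1) with ((s + 1) + 1) by ring.
    replace (s - 1 + 1) with s by ring.
    rewrite (Gamma_rec (s + 1)) by lra. rewrite (Gamma_rec s) by lra.
    assert (Hrec := mJ_rec nu c s hnu hc Hs).
    assert (P1 : Rpower c (s + 1 + 1) = Rpower c s * c ^ 2).
    { rewrite !Rpower_plus, Rpower_1 by lra. ring. }
    assert (P2 : Rpower c (s + 1) = Rpower c s * c).
    { rewrite !Rpower_plus, Rpower_1 by lra. ring. }
    assert (P3 : Rpower c (s + 2) = Rpower c s * c ^ 2).
    { replace (s + 2) with (s + 1 + 1) by ring. exact P1. }
    rewrite P1, P2, P3.
    assert (Hp := Rpower_pos c s).
    assert (Hc2 : c ^ 2 + 1 <> 0) by nra.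
    assert (Em : mJ nu c (s + 1) = (c * (2 * s + 1) * mJ nu c s - (s ^ 2 - nu ^ 2) * mJ nu c (s - 1)) / (c ^ 2 + 1)).
    { apply Rmult_eq_reg_l with (c ^ 2 + 1); auto. field_simplify; auto. lra. }
    rewrite Em. field. split; lra.
  - destruct (mu_split nu alpha c 0 hnu halpha hc) as [E1 E2].
    rewrite E1, E2. simpl INR. rewrite Rplus_0_l. reflexivity.
  - destruct (mu_split nu alpha c 1 hnu halpha hc) as [E1 E2].
    rewrite E1, E2. simpl INR. replace (1 + alpha + 1) with (alpha + 2) by ring. reflexivity.
Qed.
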